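(* Let $n$ be an integer with $2^{k_n-1}<n<2^{k_n}$, where $k_n=\lceil\log_2 n\rceil$, and let $T_n^{gfb}=(T_a,T_b)$ be the GFB tree on $n$ leaves, so that $(n_a,n_b)=(n-2^{k_n-2},2^{k_n-2})$ if $n\in(2^{k_n-1},3\cdot2^{k_n-2})$; $(n_a,n_b)=(2^{k_n-1},2^{k_n-2})$ if $n=3\cdot 2^{k_n-2}$; $(n_a,n_b)=(2^{k_n-1},n-2^{k_n-1})$ if $n\in(3\cdot2^{k_n-2},2^{k_n})$. Suppose $\widehat T=(\widehat T_a,\widehat T_b)$ is a rooted binary tree on $n$ leaves whose maximal pending subtrees have $\widehat n_a,\widehat n_b$ leaves with $(\widehat n_a,\widehat n_b)=(n-2^{k_n-2}+j,\,2^{k_n-2}-j)$ with $j\in\{1,\dots,2^{k_n-2}-1\}$ if $n\in(2^{k_n-1},3\cdot2^{k_n-2})$; $(\widehat n_a,\widehat n_b)=(2^{k_n-1}+j,\,2^{k_n-2}-j)$ with $j\in\{1,\dots,2^{k_n-2}-1\}$ if $n=3\cdot2^{k_n-2}$; $(\widehat n_a,\widehat n_b)=(2^{k_n-1}+j,\,n-2^{k_n-1}-j)$ with $j\in\{1,\dots,n-2^{k_n-1}-1\}$ if $n\in(3\cdot2^{k_n-2},2^{k_n})$. Then $c_n=\mathcal{C}(T_n^{gfb})<\mathcal{C}(\widehat T)$; in particular $\widehat T$ does not have minimal Colless index.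
   Context: A rooted binary tree with $n\geq 2$ leaves is a rooted tree whose root has degree 2 and all other internal nodes have degree 3; for $n=1$ it is a single node. Trees are considered up to isomorphism. Every rooted binary tree $T$ with $n\geq2$ leaves decomposes as $T=(T_a,T_b)$ where $T_a,T_b$ are the subtrees rooted at the two children of the root (maximal pending subtrees), with $n_a\geq n_b$ leaves respectively. For an internal node $v$ with children $v_1,v_2$, let $\kappa(v_i)$ be the number of leaves descending from $v_i$ ($1$ if a leaf). The Colless index is $\mathcal{C}(T)=\sum_v|\kappa(v_1)-\kappa(v_2)|$ over internal nodes $v$; $c_n$ is the minimum of $\mathcal{C}$ over rooted binary trees with $n$ leaves. The GFB tree $T_n^{gfb}$ is the output of: start with $n$ single-node trees; while more than one tree remains, remove a tree $u$ of minimal size (number of leaves), then remove a tree $v$ of minimal size among the remaining ones, and insert the tree with a new root whose children are the roots of $u$ and $v$; output the remaining tree. *)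

(* Defs.v *)
From mathcomp Require Import all_boot.
Set Implicit Arguments. Unset Strict Implicit. Unset Printing Implicit Defensive.

(* Rooted binary trees: a leaf, or a root with two children.
   Isomorphism (swapping children) does not affect leaf counts or Colless index. *)
Inductive tree : Type := Leaf | Node of tree & tree.

Fixpoint leaves (t : tree) : nat :=
  match t with Leaf => 1 | Node l r => leaves l + leaves r end.

Definition absdiff (a b : nat) : nat := (a - b) + (b - a).

Fixpoint colless (t : tree) : nat :=
  match t with
  | Leaf => 0
  | Node l r => absdiff (leaves l) (leaves r) + colless l + colless r
  end.

Definition is_min_colless (n c : nat) : Prop :=
  (exists t, leaves t = n /\ colless t = c) /\
  (forall t, leaves t = n -> c <= colless t).

(* GFB algorithm: keep the forest sorted by size (stable sort), remove the
   first (a minimal-size tree u) and then the next (a minimal-size tree v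
   among the remaining ones), and insert Node u v. *)
Definition size_le (a b : tree) : bool := leaves a <= leaves b.

Fixpoint gfb_loop (fuel : nat) (s : seq tree) : tree :=
  match fuel with
  | 0 => head Leaf s
  | f.+1 =>
      match sort size_le s with
      | u :: v :: r => gfb_loop f (Node u v :: r)
      | [:: x] => x
      | [::] => Leaf
      end
  end.

(* n - 1 merges are needed; fuel n suffices *)
Definition gfb (n : nat) : tree := gfb_loop n (nseq n Leaf).

(* Main.v *)
Require Import Defs.
From mathcomp Require Import all_boot zify.

Fixpoint fa (fu n : nat) : nat :=
  match fu with
  | 0 => 0
  | fu'.+1 => if n <= 1 then 0 else fa fu' (n - n %/ 2) + fa fu' (n %/ 2) + n %% 2
  end.

Lemma fa_stable fu : forall fu' n, n <= fu -> n <= fu' -> fa fu n = fa fu' n.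
Proof.
elim: fu => [|fu IH] [|fu'] n /= h1 h2 //.
- by have -> : n = 0 by lia.
- by have -> : n = 0 by lia.
- case: ifP => // hn.
  rewrite (IH fu' (n - n %/ 2)); try lia.
  by rewrite (IH fu' (n %/ 2)); try lia.
Qed.

Definition f n := fa n n.

Lemma fE n : 2 <= n -> f n = f (n - n %/ 2) + f (n %/ 2) + n %% 2.
Proof.
move=> hn; rewrite /f.
case: n hn => [|n] hn //=.
have -> : (n.+1 <= 1) = false by lia.
rewrite (fa_stable n (n.+1 - n.+1 %/ 2) (n.+1 - n.+1 %/ 2)); try lia.
by rewrite (fa_stable n (n.+1 %/ 2) (n.+1 %/ 2)); lia.
Qed.

Lemma f_le1 m : m <= 1 -> f m = 0.
Proof. by case: m => [|[|]]. Qed.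

Lemma halfE {x} u v : 2 <= x -> x = u + v -> absdiff u v <= 1 ->
  f x = f u + f v + absdiff u v.
Proof.
rewrite /absdiff => hx hxuv hd.
rewrite fE //.
have [[-> ->] | [-> ->]] : (u = x - x %/ 2 /\ v = x %/ 2) \/ (v = x - x %/ 2 /\ u = x %/ 2) by lia.
- lia.
- lia.
Qed.

Lemma f_pow i : f (2 ^ i) = 0.
Proof.
elim: i => [|i IH]; first by [].
have hp := expn_gt0 2 i.
rewrite expnS (halfE (2 ^ i) (2 ^ i)); rewrite /absdiff ?IH; lia.
Qed.

Lemma fA i : forall s, 2 ^ i <= s <= 2 ^ i.+1 -> f (2 ^ i + s) = s - 2 ^ i + f s.
Proof.
elim: i => [|i IH] s.
  rewrite expn0 expn1 => hs.
  by have [->|->] : s = 1 \/ s = 2 by lia.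
rewrite !expnS => hs.
set P := 2 ^ i in IH hs *.
have hP : 0 < P by rewrite /P expn_gt0.
have h1 := IH (s - s %/ 2); have h2 := IH (s %/ 2).
rewrite expnS -/P in h1 h2.
rewrite (halfE (P + (s - s %/ 2)) (P + s %/ 2)); try (rewrite /absdiff; lia).
rewrite h1; last lia. rewrite h2; last lia.
rewrite (halfE (x:=s) (s - s %/ 2) (s %/ 2)) /absdiff; lia.
Qed.

Lemma fB i : forall s, 2 ^ i <= s <= 2 ^ i.+1 -> f (s + 2 ^ i.+1) = 2 ^ i.+1 - s + f s.
Proof.
elim: i => [|i IH] s.
  rewrite expn0 expn1 => hs.
  by have [->|->] : s = 1 \/ s = 2 by lia.
rewrite !expnS => hs.
set P := 2 ^ i in IH hs *.
have hP : 0 < P by rewrite /P expn_gt0.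
have h1 := IH (s - s %/ 2); have h2 := IH (s %/ 2).
rewrite expnS -/P in h1 h2.
rewrite (halfE ((s - s %/ 2) + 2 * P) (s %/ 2 + 2 * P)); try (rewrite /absdiff; lia).
rewrite h1; last lia. rewrite h2; last lia.
rewrite (halfE (x:=s) (s - s %/ 2) (s %/ 2)) /absdiff; lia.
Qed.

Lemma f2 : f 2 = 0. Proof. by []. Qed.

Lemma absdiffC a b : absdiff a b = absdiff b a.
Proof. rewrite /absdiff; lia. Qed.

Lemma fG n : forall x y, x + y <= n -> 1 <= x -> 1 <= y ->
  f (x + y) <= absdiff x y + f x + f y.
Proof.
elim: n => [|n IH] x y hn; first lia.
wlog hyx : x y hn / y <= x.
  move=> H hx hy; case: (leqP y x) => h; first exact: H.
  have := H y x ltac:(lia) ltac:(lia) ltac:(lia) ltac:(lia).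
  rewrite [y + x]addnC absdiffC; lia.
move=> hx hy.
case: (leqP x 1) => hx1.
  have -> : x = 1 by lia. have -> : y = 1 by lia. by [].
have [a1 Ea1] := ex_intro (fun a => a = x - x %/ 2) _ erefl.
have [a2 Ea2] := ex_intro (fun a => a = x %/ 2) _ erefl.
have [b1 Eb1] := ex_intro (fun a => a = y %/ 2) _ erefl.
have [b2 Eb2] := ex_intro (fun a => a = y - y %/ 2) _ erefl.
have hfx : f x = f a1 + f a2 + absdiff a1 a2 by apply: halfE; rewrite /absdiff; lia.
have hfy : 2 <= y -> f y = f b2 + f b1 + absdiff b2 b1 by move=> ?; apply: halfE; rewrite /absdiff; lia.
have hy1 : y <= 1 -> f y = 0 by apply: f_le1.
have hb1 : b1 <= 1 -> f b1 = 0 by apply: f_le1.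
have hb2 : b2 <= 1 -> f b2 = 0 by apply: f_le1.
have hfn : f (x + y) = f (a1 + b1) + f (a2 + b2) + absdiff (a1 + b1) (a2 + b2).
  by apply: halfE; rewrite /absdiff; lia.
have I1 : 1 <= b1 -> f (a1 + b1) <= absdiff a1 b1 + f a1 + f b1.
  move=> ?; apply: IH; lia.
have I1' : b1 = 0 -> f (a1 + b1) = f a1 by move=> ->; rewrite addn0.
have I2 : f (a2 + b2) <= absdiff a2 b2 + f a2 + f b2.
  apply: IH; lia.
have hxa : x = a1 + a2 by lia.
have hyb : y = b1 + b2 by lia.
have hab : b1 <= a2 by lia.
have [ea|ea] : a1 = a2 \/ a1 = a2 + 1 by lia.
all: have [eb|eb] : b2 = b1 \/ b2 = b1 + 1 by lia.
all: clear Ea1 Ea2 Eb1 Eb2; subst x y a1 b2;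
move: hfx hfy hy1 hb1 hb2 hfn I1 I1' I2; rewrite /absdiff; lia.
Qed.

Lemma arith a1 a2 b1 b2 Q :
  a2 <= a1 <= a2 + 1 -> b1 <= b2 <= b1 + 1 -> b1 <= a2 -> b1 + b2 <= a1 + a2 ->
  2 <= a1 + a2 -> 1 <= b1 + b2 ->
  2 * Q <= a1 + a2 + (b1 + b2) <= 4 * Q ->
  (2 * Q < a1 + a2 \/ 2 * Q < b1 + b2 \/ 2 * (a1 + a2) < 2 * Q \/ 2 * (b1 + b2) < 2 * Q) ->
  ((if b1 == 0 then 0 else absdiff a1 b1) + absdiff a2 b2 + absdiff (a1 + b1) (a2 + b2)
     <= absdiff (a1 + a2) (b1 + b2) + absdiff a1 a2 + (if b1 + b2 <= 1 then 0 else absdiff b2 b1)) /\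
  (((if b1 == 0 then 0 else absdiff a1 b1) + absdiff a2 b2 + absdiff (a1 + b1) (a2 + b2)
     < absdiff (a1 + a2) (b1 + b2) + absdiff a1 a2 + (if b1 + b2 <= 1 then 0 else absdiff b2 b1))
  \/ (1 <= b1 /\ (Q < a1 \/ Q < b1 \/ 2 * a1 < Q \/ 2 * b1 < Q))
  \/ (Q < a2 \/ Q < b2 \/ 2 * a2 < Q \/ 2 * b2 < Q)).
Proof.
move=> ha hb hab hxy hx hy hr hbad.
rewrite /absdiff.
case: (leqP (b1 + b2) 1) => hle; case: (b1 =P 0) => hb0.
all: have [ea|ea] : a1 = a2 \/ a1 = a2 + 1 by lia.
all: have [eb|eb] : b2 = b1 \/ b2 = b1 + 1 by lia.
all: subst a1 b2.
all: lia.
Qed.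

Lemma fS n : forall k x y, x + y <= n -> 1 <= x -> 1 <= y ->
  2 ^ (k - 1) <= x + y <= 2 ^ k ->
  (2 ^ (k - 1) < x \/ 2 ^ (k - 1) < y \/ 2 * x < 2 ^ (k - 1) \/ 2 * y < 2 ^ (k - 1)) ->
  f (x + y) < absdiff x y + f x + f y.
Proof.
elim: n => [|n IH] k x y hn; first lia.
wlog hyx : x y hn / y <= x.
  move=> H hx hy hr hb; case: (leqP y x) => h; first exact: H.
  have := H y x ltac:(lia) ltac:(lia) ltac:(lia) ltac:(lia) ltac:(lia) ltac:(lia).
  rewrite [y + x]addnC absdiffC; lia.
move=> hx hy hr hb.
have hP := expn_gt0 2 (k - 1).
case: (leqP x 1) => hx1; first lia.
case: k hr hb hP => [|[|k]] hr hb hP.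
- move: hr; rewrite expn0 /=; lia.
- move: hr hb; rewrite expn1 /=; lia.
have eP : 2 ^ (k.+2 - 1) = 2 * 2 ^ k by rewrite subn1 /= expnS.
have eK : 2 ^ k.+2 = 4 * 2 ^ k by rewrite !expnS; lia.
have eQ : 2 ^ (k.+1 - 1) = 2 ^ k by rewrite subn1.
have eQ2 : 2 ^ k.+1 = 2 * 2 ^ k by rewrite expnS.
rewrite eP eK in hr hb.
set Q := 2 ^ k in eP eK eQ eQ2 hr hb.
have [a1 Ea1] := ex_intro (fun a => a = x - x %/ 2) _ erefl.
have [a2 Ea2] := ex_intro (fun a => a = x %/ 2) _ erefl.
have [b1 Eb1] := ex_intro (fun a => a = y %/ 2) _ erefl.
have [b2 Eb2] := ex_intro (fun a => a = y - y %/ 2) _ erefl.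
have hxa : x = a1 + a2 by clear -Ea1 Ea2; lia.
have hyb : y = b1 + b2 by clear -Eb1 Eb2; lia.
have ha : a2 <= a1 <= a2 + 1 by clear -Ea1 Ea2; lia.
have hbb : b1 <= b2 <= b1 + 1 by clear -Eb1 Eb2; lia.
have hab : b1 <= a2 by clear -Ea2 Eb1 hyx; lia.
clear Ea1 Ea2 Eb1 Eb2. subst x y.
have hfx : f (a1 + a2) = f a1 + f a2 + absdiff a1 a2 by apply: halfE; rewrite /absdiff; lia.
have hfy : 2 <= b1 + b2 -> f (b1 + b2) = f b2 + f b1 + absdiff b2 b1 by move=> ?; apply: halfE; rewrite /absdiff; lia.
have hy1 : b1 + b2 <= 1 -> f (b1 + b2) = 0 by apply: f_le1.
have hb1 : b1 <= 1 -> f b1 = 0 by apply: f_le1.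
have hb2 : b2 <= 1 -> f b2 = 0 by apply: f_le1.
have hfn : f (a1 + a2 + (b1 + b2)) = f (a1 + b1) + f (a2 + b2) + absdiff (a1 + b1) (a2 + b2).
  by apply: halfE; rewrite /absdiff; lia.
have I1 : 1 <= b1 -> f (a1 + b1) <= absdiff a1 b1 + f a1 + f b1.
  move=> ?; apply: fG (leqnn _) _ _; lia.
have I1' : b1 = 0 -> f (a1 + b1) = f a1 by move=> ->; rewrite addn0.
have I2 : f (a2 + b2) <= absdiff a2 b2 + f a2 + f b2.
  apply: fG (leqnn _) _ _; lia.
have S1 : 1 <= b1 -> (Q < a1 \/ Q < b1 \/ 2 * a1 < Q \/ 2 * b1 < Q) ->
   f (a1 + b1) < absdiff a1 b1 + f a1 + f b1.
  move=> h1 h2; apply: (IH k.+1); rewrite ?eQ ?eQ2; clear -h1 h2 hr hn ha hbb hab hx hy hx1 hyx; lia.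
have S2 : (Q < a2 \/ Q < b2 \/ 2 * a2 < Q \/ 2 * b2 < Q) ->
   f (a2 + b2) < absdiff a2 b2 + f a2 + f b2.
  move=> h2; apply: (IH k.+1); rewrite ?eQ ?eQ2; clear -h2 hr hn ha hbb hab hx hy hx1 hyx; lia.
clear eP eK eQ eQ2 IH.
have C1 : f (a1 + b1) <= (if b1 == 0 then 0 else absdiff a1 b1) + f a1 + f b1.
  case: (b1 =P 0) => [E|E]; last by apply: I1; lia.
  rewrite I1' // hb1; last lia.
  rewrite /=; lia.
have Fy : f (b1 + b2) = f b1 + f b2 + (if b1 + b2 <= 1 then 0 else absdiff b2 b1).
  case: leqP => h; first by rewrite hy1 // hb1 ?hb2 //; lia.
  by rewrite hfy; lia.
have E1 : 1 <= b1 -> (if b1 == 0 then 0 else absdiff a1 b1) = absdiff a1 b1.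
  by case: (b1 =P 0) => // ->.
have [Hns Hcase] := arith _ _ _ _ _ ha hbb hab hyx hx1 hy hr hb.
rewrite hfn hfx Fy.
case: Hcase => [Hs|[[Hb1 Hbad1]|Hbad2]].
- move: C1 I2 Hns Hs.
  generalize (if b1 == 0 then 0 else absdiff a1 b1) (if b1 + b2 <= 1 then 0 else absdiff b2 b1)
    (absdiff a2 b2) (absdiff (a1 + b1) (a2 + b2)) (absdiff (a1 + a2) (b1 + b2))
    (absdiff a1 a2) (f (a1 + b1)) (f (a2 + b2)) (f a1) (f a2) (f b1) (f b2).
  clear; intros; lia.
- have := S1 Hb1 Hbad1; have := E1 Hb1.
  move: I2 Hns.
  generalize (if b1 == 0 then 0 else absdiff a1 b1) (if b1 + b2 <= 1 then 0 else absdiff b2 b1)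
    (absdiff a1 b1) (absdiff a2 b2) (absdiff (a1 + b1) (a2 + b2)) (absdiff (a1 + a2) (b1 + b2))
    (absdiff a1 a2) (f (a1 + b1)) (f (a2 + b2)) (f a1) (f a2) (f b1) (f b2).
  clear; intros; lia.
- have := S2 Hbad2.
  move: C1 Hns.
  generalize (if b1 == 0 then 0 else absdiff a1 b1) (if b1 + b2 <= 1 then 0 else absdiff b2 b1)
    (absdiff a2 b2) (absdiff (a1 + b1) (a2 + b2)) (absdiff (a1 + a2) (b1 + b2))
    (absdiff a1 a2) (f (a1 + b1)) (f (a2 + b2)) (f a1) (f a2) (f b1) (f b2).
  clear; intros; lia.
Qed.

Definition InvN (l : seq nat) : Prop :=
  exists i, all (fun x => 2 ^ i <= x <= 2 * 2 ^ i) l &&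
            (count (fun x => (x != 2 ^ i) && (x != 2 * 2 ^ i)) l <= 1).

Lemma all_comb3 {P1 P2 P3 Q : pred nat} {r} : all P1 r -> all P2 r -> all P3 r ->
  (forall x, P1 x -> P2 x -> P3 x -> Q x) -> all Q r.
Proof.
elim: r => //= x r IH /andP[h1 h1'] /andP[h2 h2'] /andP[h3 h3'] H.
by rewrite H //= IH.
Qed.

Lemma count0_all (q : pred nat) r : count q r = 0 -> all (fun x => ~~ q x) r.
Proof. by elim: r => //= x r IH; case: (q x) => //= /IH. Qed.

Lemma all_count0 {q : pred nat} {r} : all (fun x => ~~ q x) r -> count q r = 0.
Proof. by elim: r => //= x r IH /andP[h1 h2]; rewrite IH // (negbTE h1). Qed.

Lemma invN_step a b r : InvN [:: a, b & r] -> sorted leq [:: a, b & r] ->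
  InvN ((a + b) :: r) /\ f (a + b) = absdiff a b + f a + f b.
Proof.
case=> i /andP[hall hcnt] hs.
have fp := f_pow i. have fp2 := f_pow i.+1.
have hpA := fA i. have hpB := fB i.
rewrite expnS in fp2 hpA hpB.
set p := 2 ^ i in hall hcnt fp fp2 hpA hpB.
have hp0 : 0 < p by rewrite expn_gt0.
move: hall => /= /and3P[ha hb hr].
move: hcnt => /= hcnt.
move: hs => /= /andP[hab hs].
have hmin : all (leq b) r := order_path_min leq_trans hs.
split; last first.
  case: (a =P p) => [Ea|Na].
    rewrite Ea hpA; last by lia.
    rewrite fp /absdiff; lia.
  have Eb : b = 2 * p by move: hcnt; lia.
  rewrite Eb hpB; last by lia.
  rewrite fp2 /absdiff; lia.
case: (a =P p) => [Ea|Na]; first case: (b =P p) => [Eb|Nb].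
- exists i; rewrite -/p /= hr andbT.
  rewrite Ea Eb; apply/andP; split; first lia.
  move: hcnt; lia.
-
  have Hpb : p < b by lia.
  have Hc : all (fun x => ~~ ((x != p) && (x != 2 * p))) r.
    case: (b =P 2 * p) => [Eb|Nb'].
      by apply: (all_comb3 hr hmin hmin) => x /= h1 h2 _; lia.
    apply: count0_all; move: hcnt; lia.
  have H2 : all (fun x => x == 2 * p) r.
    apply: (all_comb3 hr hmin Hc) => x /= h1 h2 h3; lia.
  exists i.+1; rewrite expnS -/p /=.
  apply/andP; split.
    apply/andP; split; first lia.
    by apply: (all_comb3 H2 H2 H2) => x /= h1 _ _; lia.
  rewrite (all_count0 (r := r)); first by case: (_ && _).
  by apply: (all_comb3 H2 H2 H2) => x /= h1 _ _; lia.
- have Hpb : p < b by lia.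
  have Hc : all (fun x => ~~ ((x != p) && (x != 2 * p))) r.
    case: (b =P 2 * p) => [Eb|Nb].
      by apply: (all_comb3 hr hmin hmin) => x /= h1 h2 _; lia.
    apply: count0_all; move: hcnt; lia.
  have H2 : all (fun x => x == 2 * p) r.
    apply: (all_comb3 hr hmin Hc) => x /= h1 h2 h3; lia.
  exists i.+1; rewrite expnS -/p /=.
  apply/andP; split.
    apply/andP; split; first lia.
    by apply: (all_comb3 H2 H2 H2) => x /= h1 _ _; lia.
  rewrite (all_count0 (r := r)); first by case: (_ && _).
  by apply: (all_comb3 H2 H2 H2) => x /= h1 _ _; lia.
Qed.

Definition opt (t : tree) : bool := colless t == f (leaves t).

Lemma InvN_sort l : InvN l -> InvN (sort leq l).
Proof.
case=> i /andP[h1 h2]; exists i.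
by rewrite all_count count_sort size_sort -all_count h1 count_sort h2.
Qed.

Lemma loop_ok fuel : forall s, all opt s -> InvN (map leaves s) -> 0 < size s <= fuel.+1 ->
  leaves (gfb_loop fuel s) = sumn (map leaves s) /\
  colless (gfb_loop fuel s) = f (leaves (gfb_loop fuel s)).
Proof.
elim: fuel => [|fu IH] s hopt hinv hsz.
  case: s hopt hinv hsz => [|t [|t' s]] //= /andP[/eqP ho _] _ _.
  by rewrite addn0.
have hmap : map leaves (sort size_le s) = sort leq (map leaves s).
  by rewrite sort_map.
have hopt' : all opt (sort size_le s).
  by rewrite all_count count_sort size_sort -all_count.
have hsorted : sorted size_le (sort size_le s).
  by apply: sort_sorted => x y; exact: leq_total.
have hinv' : InvN (map leaves (sort size_le s)) by rewrite hmap; exact: InvN_sort.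
have hsum : sumn (map leaves (sort size_le s)) = sumn (map leaves s).
  by rewrite hmap; apply: perm_sumn; rewrite perm_sort.
have hsz' : size (sort size_le s) = size s by rewrite size_sort.
rewrite /=.
move: hopt' hsorted hinv' hsum hsz'.
case: (sort size_le s) => [|u [|v r]] /=.
- move=> _ _ _ _ hs; lia.
- by move=> /andP[/eqP ho _] _ _ <- _; rewrite addn0.
move=> /and3P[/eqP hu /eqP hv hr] hs hinv2 hsum2 hsz2.
have hs2 : sorted leq [:: leaves u, leaves v & map leaves r].
  by rewrite -[[:: leaves u, leaves v & map leaves r]]/(map leaves [:: u, v & r]) sorted_map.
have [hinv3 hf] := invN_step _ _ _ hinv2 hs2.
have hN : opt (Node u v) by rewrite /opt /= hu hv hf.
have := IH (Node u v :: r).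
rewrite /= hN hr => /(_ isT hinv3).
case; first lia.
move=> -> ->; split => //.
by rewrite -hsum2 addnA.
Qed.

Lemma gfb_ok n : 0 < n -> leaves (gfb n) = n /\ colless (gfb n) = f n.
Proof.
move=> hn.
have := loop_ok n (nseq n Leaf).
rewrite /gfb size_nseq.
have -> : sumn (map leaves (nseq n Leaf)) = n.
  by rewrite map_nseq sumn_nseq mul1n.
case.
- by elim: n {hn} => //= n ->.
- exists 0; rewrite map_nseq /=; apply/andP; split.
    by elim: n {hn} => //= n ->.
  by rewrite count_nseq /= mul0n.
- lia.
move=> -> ->; split => //.
Qed.

Lemma leaves_pos t : 0 < leaves t.
Proof. elim: t => //= l IHl r IHr; lia. Qed.

Lemma lower t : f (leaves t) <= colless t.
Proof.
elim: t => [|l IHl r IHr] //=.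
have := fG _ (leaves l) (leaves r) (leqnn _) (leaves_pos l) (leaves_pos r).
lia.
Qed.

Theorem theorem6 (n k j : nat) (Ta Tb : tree) :
  2 ^ (k - 1) < n < 2 ^ k ->
  (let q := 2 ^ (k - 2) in
   [/\ 2 ^ (k - 1) < n < 3 * q, 1 <= j <= q - 1,
       leaves Ta = n - q + j & leaves Tb = q - j]
   \/ [/\ n = 3 * q, 1 <= j <= q - 1,
          leaves Ta = 2 ^ (k - 1) + j & leaves Tb = q - j]
   \/ [/\ 3 * q < n < 2 ^ k, 1 <= j <= n - 2 ^ (k - 1) - 1,
          leaves Ta = 2 ^ (k - 1) + j & leaves Tb = n - 2 ^ (k - 1) - j]) ->
  is_min_colless n (colless (gfb n)) /\
  colless (gfb n) < colless (Node Ta Tb).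
Proof.
move=> hn hcase.
have hn0 : 0 < n by lia.
have [hl hc] := gfb_ok _ hn0.
split.
  split; first by exists (gfb n).
  by move=> t ht; rewrite hc -ht; exact: lower.
rewrite hc /=.
have lTa := lower Ta; have lTb := lower Tb.
suff : f n < absdiff (leaves Ta) (leaves Tb) + f (leaves Ta) + f (leaves Tb) by lia.
move: hcase => /=.
case: k hn => [|[|k]] hn.
- by move: hn; rewrite sub0n expn0; lia.
- by move: hn; rewrite subnn expn0 expn1; lia.
have e1 : 2 ^ (k.+2 - 1) = 2 * 2 ^ k by rewrite subn1 /= expnS.
have e2 : 2 ^ (k.+2 - 2) = 2 ^ k by rewrite subn2.
have e3 : 2 ^ k.+2 = 4 * 2 ^ k by rewrite !expnS; lia.
have hQ := expn_gt0 2 k.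
rewrite e1 e2 e3 in hn *.
set Q := 2 ^ k in e1 e2 e3 hn hQ *.
have hpa := leaves_pos Ta; have hpb := leaves_pos Tb.
move=> hcase.
have hsum : leaves Ta + leaves Tb = n.
  by case: hcase => [[h1 h2 h3 h4]|[[h1 h2 h3 h4]|[h1 h2 h3 h4]]]; lia.
have := fS _ (k.+2) (leaves Ta) (leaves Tb) (leqnn _) hpa hpb.
rewrite e1 e3 hsum => H; apply: H; first lia.
by case: hcase => [[h1 h2 h3 h4]|[[h1 h2 h3 h4]|[h1 h2 h3 h4]]]; lia.
Qed.
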